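(* Let $\mu\in\mathcal P_c^*(\mathbb R^2)$, $\mathbf A\in\mathrm{GL}(2)$, $\mathbf y\in\mathbb R^2$ and $\mu_{\mathbf A,\mathbf y}=(\mathbf A\cdot+\mathbf y)_\#\mu$. Then $\mathcal N_{\mathrm m}[\mu_{\mathbf A,\mathbf y}]=\mathcal N_{\mathrm m}[\mu]$.
   Context: $\mathbb S_1=\{x\in\mathbb R^2:\|x\|=1\}$; $\mathcal R_\theta[\mu]=(\langle\cdot,\theta\rangle)_\#\mu$. Fix a reference Borel probability measure $\rho$ on $\mathbb R$ without atoms. For a probability measure $\nu$ on $\mathbb R$ with $F_\nu(t)=\nu((-\infty,t])$, $F_\nu^{[-1]}(t)=\inf\{s:F_\nu(s)>t\}$ and the CDT is $\hat\nu=F_\nu^{[-1]}\circ F_\rho$; $\widehat{\mathcal R}_\theta[\mu]$ is the CDT of $\mathcal R_\theta[\mu]$. For $g\in L^2_\rho(\mathbb R)$, $\operatorname{mean}(g)=\int g\,\mathrm d\rho$, $\operatorname{std}(g)=(\int|g-\operatorname{mean}(g)|^2\mathrm d\rho)^{1/2}$. $\mathcal P_c^*(\mathbb R^2)$ is the set of compactly supported Borel probability measures on $\mathbb R^2$ whose support has affine hull of dimension $>1$. For such $\mu$: $\mathcal N_\theta[\mu](t)=\big(\widehat{\mathcal R}_\theta[\mu](t)-\operatorname{mean}(\widehat{\mathcal R}_\theta[\mu])\big)/\operatorname{std}(\widehat{\mathcal R}_\theta[\mu])$ and $\mathcal N_{\mathrm m}[\mu](t)=\sup_{\theta\in\mathbb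 S_1}\mathcal N_\theta[\mu](t)$, $t\in\mathbb R$. *)

(* Defs.v *)
From HB Require Import structures.
From mathcomp Require Import all_boot all_order all_algebra.
From mathcomp Require Import all_classical all_reals all_analysis.
Set Implicit Arguments. Unset Strict Implicit. Unset Printing Implicit Defensive.
Import Order.TTheory GRing.Theory Num.Theory.
Import numFieldNormedType.Exports.
Local Open Scope classical_set_scope.
Local Open Scope ring_scope.

Section Defs.
Variable R : realType.

Definition dot2 (x th : R * R) : R := x.1 * th.1 + x.2 * th.2.
Definition circle1 : set (R * R) := [set th | th.1 ^+ 2 + th.2 ^+ 2 = 1].

Definition pushf (T U : Type) (f : T -> U) (nu : set T -> \bar R) : set U -> \bar R :=
  fun B => nu (f @^-1` B).

Definition radon (th : R * R) (mu : set (R * R) -> \bar R) : set R -> \bar R :=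
  pushf (fun x => dot2 x th) mu.

Definition cdf (nu : set R -> \bar R) (t : R) : R := fine (nu [set s | s <= t]).

(* generalized inverse F^[-1](t) = inf {s | F(s) > t}, with inf of the empty set = +oo *)
Definition gen_inv (F : R -> R) (t : R) : \bar R :=
  ereal_inf [set s%:E | s in [set s : R | t < F s]].

Definition cdt (rho : set R -> \bar R) (nu : set R -> \bar R) (t : R) : \bar R :=
  gen_inv (cdf nu) (cdf rho t).

Definition meanL (rho : {measure set R -> \bar R}) (g : R -> \bar R) : R :=
  fine (\int[rho]_x g x)%E.

Definition stdL (rho : {measure set R -> \bar R}) (g : R -> \bar R) : R :=
  Num.sqrt (fine (\int[rho]_x ((g x - (meanL rho g)%:E) * (g x - (meanL rho g)%:E)))%E).

Definition Ntheta (rho : {measure set R -> \bar R}) (th : R * R)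
  (mu : set (R * R) -> \bar R) (t : R) : \bar R :=
  let g := cdt rho (radon th mu) in
  ((g t - (meanL rho g)%:E) * ((stdL rho g)^-1)%:E)%E.

Definition Nmax (rho : {measure set R -> \bar R}) (mu : set (R * R) -> \bar R) (t : R)
  : \bar R :=
  ereal_sup [set Ntheta rho th mu t | th in circle1].

Definition msupport (mu : set (R * R) -> \bar R) : set (R * R) :=
  [set x | forall U : set (R * R), open U -> U x -> (0 < mu U)%E].

(* P_c^*(R^2): compact support whose affine hull has dimension > 1,
   i.e. the support is not contained in any affine line *)
Definition in_Pcstar (mu : set (R * R) -> \bar R) : Prop :=
  compact (msupport mu) /\
  ~ (exists th c, circle1 th /\ msupport mu `<=` [set x | dot2 x th = c]).

Definition affmap (A : 'M[R]_2) (y : R * R) (x : R * R) : R * R :=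
  (A 0 0 * x.1 + A 0 1 * x.2 + y.1, A 1 0 * x.1 + A 1 1 * x.2 + y.2).

End Defs.

(* Main.v *)
Require Import Defs.
From HB Require Import structures.
From mathcomp Require Import all_boot all_order all_algebra.
From mathcomp Require Import all_classical all_reals all_analysis.
From mathcomp Require Import measurable_realfun lebesgue_integral.
From mathcomp Require Import ring lra.
Import Order.TTheory GRing.Theory Num.Theory.
Local Open Scope classical_set_scope.
Local Open Scope ring_scope.

Section P1.
Variable R : realType.

Lemma nd_emeasurable (f : R -> \bar R) :
  {homo f : x y / x <= y >-> (x <= y)%E} -> measurable_fun [set: R] f.
Proof.
move=> f_nd.
apply: (measurability _ (ErealGenCInfty.measurableE R)) => /= _ [_] [r] -> <-.
apply: measurableI => //; apply: is_interval_measurable => s t/=.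
rewrite !in_itv/= !andbT => fs ft u /andP[su ut].
by rewrite in_itv/= andbT (le_trans fs)// f_nd.
Qed.

Lemma inf_aff (S : set R) (r c : R) : 0 < r ->
  ereal_inf [set ((r * u + c)%:E) | u in S] =
  (r%:E * ereal_inf [set u%:E | u in S] + c%:E)%E.
Proof.
move=> r0.
apply/le_anti/andP; split.
- set J := ereal_inf _.
  case EJ: J => [j| |]; last by rewrite leNye.
  + have lb : (((j - c) / r)%:E <= ereal_inf [set u%:E | u in S])%E.
      apply/ereal_infP => _ [u Su <-]; rewrite lee_fin ler_pdivrMr//.
      have : (J <= (r * u + c)%:E)%E by apply: ereal_inf_lbound; exists u.
      by rewrite EJ lee_fin => h; rewrite lerBlDr; rewrite mulrC.
    move: lb; case: (ereal_inf _) => [i| |] //.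
    * rewrite !lee_fin ler_pdivrMr// => h.
      by rewrite -lerBlDr mulrC.
    * by move=> _; rewrite mulry gtr0_sg// mul1e addye// leey.
  + have S0 : S = set0.
      apply/seteqP; split => // u Su.
      have : (J <= (r * u + c)%:E)%E by apply: ereal_inf_lbound; exists u.
      by rewrite EJ.
    by rewrite S0 image_set0 ereal_inf0 mulry gtr0_sg// mul1e.
- apply/ereal_infP => _ [u Su <-].
  have : (ereal_inf [set u%:E | u in S] <= u%:E)%E by apply: ereal_inf_lbound; exists u.
  case: (ereal_inf _) => [i| |] //.
  + by rewrite lee_fin -(EFinM r i) -EFinD lee_fin => h; rewrite lerD2r ler_pM2l.
  + by move=> _; rewrite (mulrNy r) gtr0_sg// mul1e addNye leNye.
Qed.

Lemma cdt_aff (rho nu : set R -> \bar R) (r c : R) : 0 < r -> forall t,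
  cdt rho (pushf (fun s => r * s + c) nu) t = (r%:E * cdt rho nu t + c%:E)%E.
Proof.
move=> r0 t; rewrite /cdt /gen_inv -inf_aff//.
congr ereal_inf.
have cE : forall s, Defs.cdf (pushf (fun s => r * s + c) nu) s = Defs.cdf nu ((s - c) / r).
  move=> s; rewrite /Defs.cdf /pushf; congr (fine (nu _)).
  apply/seteqP; split => x /=.
  - by rewrite ler_pdivlMr// => h; rewrite lerBrDr mulrC.
  - by rewrite ler_pdivlMr// => h; rewrite mulrC -lerBrDr.
apply/seteqP; split => _ [s /= Hs <-].
- exists ((s - c) / r); first by rewrite /= -cE.
  by congr EFin; field; rewrite gt_eqF.
- exists (r * s + c) => //=; rewrite cE.
  by have -> : (r * s + c - c) / r = s by field; rewrite gt_eqF.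
Qed.

End P1.

Section P2.
Variable R : realType.
Variable rho : probability R R.

Definition Nf (g : R -> \bar R) (t : R) : \bar R :=
  ((g t - (meanL rho g)%:E) * ((stdL rho g)^-1)%:E)%E.

Lemma int_of_fin (g : R -> \bar R) : measurable_fun [set: R] g ->
  (\int[rho]_x g x)%E \is a fin_num -> rho.-integrable [set: R] g.
Proof.
move=> mg; rewrite integralE fin_numB => /andP[hp hn].
apply/integrableP; split => //.
rewrite (_ : (fun x => `|g x|)%E = (fun x => g^\+ x + g^\- x)%E); last first.
  by apply/funext => x; rewrite -[LHS]/((abse \o g) x) fune_abse.
rewrite (ge0_integralD _ _ (fun x _ => funepos_ge0 g x) (measurable_funepos mg)
   (fun x _ => funeneg_ge0 g x) (measurable_funeneg mg))//.
apply: lte_add_pinfty; rewrite -ge0_fin_numE//; apply: integral_ge0 => x _;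
  [exact: funepos_ge0|exact: funeneg_ge0].
Qed.

Lemma sq_int (g : R -> \bar R) : measurable_fun [set: R] g ->
  (\int[rho]_x (g x * g x))%E \is a fin_num -> rho.-integrable [set: R] g.
Proof.
move=> mg hf.
have mgg : measurable_fun [set: R] (fun x => g x * g x)%E by exact: emeasurable_funM.
have gg0 : forall x, (0 <= g x * g x)%E by move=> x; rewrite -expe2 sqre_ge0.
have igg : rho.-integrable [set: R] (fun x => g x * g x)%E.
  apply/integrableP; split => //.
  under eq_integral do rewrite gee0_abs//.
  by rewrite -ge0_fin_numE//; apply: integral_ge0.
have i1 : rho.-integrable [set: R] (fun x => g x * g x + 1%:E)%E.
  exact: (integrableD _ igg (finite_measure_integrable_cst rho 1 _)).
apply: (le_integrable measurableT mg _ i1) => x _.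
case: (g x) => [v| |] //=.
rewrite lee_fin [`|v * v + 1|]ger0_norm; last by nra.
by rewrite ler_norml; apply/andP; split; nra.
Qed.

Lemma notint_N (g : R -> \bar R) t : measurable_fun [set: R] g ->
  ~ rho.-integrable [set: R] g -> Nf g t = 0%E.
Proof.
move=> mg ni.
have m0 : meanL rho g = 0.
  rewrite /meanL; have : ~ ((\int[rho]_x g x)%E \is a fin_num).
    by move=> /(int_of_fin g mg) /ni.
  by case: (\int[rho]_x g x)%E => //= v h; exfalso; exact: h.
have s0 : stdL rho g = 0.
  rewrite /stdL m0.
  have -> : (fun x => (g x - 0%:E) * (g x - 0%:E))%E = (fun x => g x * g x)%E.
    by apply/funext => x; case: (g x) => //= v; rewrite ?subr0 ?oppr0 ?addr0.
  have : ~ ((\int[rho]_x (g x * g x))%E \is a fin_num).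
    by move=> /(sq_int g mg) /ni.
  case: (\int[rho]_x (g x * g x))%E => [v h| |] /=; first by exfalso; exact: h.
  1-2: by move=> _; rewrite sqrtr0.
by rewrite /Nf s0 invr0 mule0.
Qed.

Lemma Nf_aff (g : R -> \bar R) (r c : R) t : measurable_fun [set: R] g -> 0 < r ->
  Nf (fun t => r%:E * g t + c%:E)%E t = Nf g t.
Proof.
move=> mg r0.
pose h : R -> \bar R := (fun t => r%:E * g t + c%:E)%E.
rewrite -/h.
have mh : measurable_fun [set: R] h.
  by apply: emeasurable_funD; [exact: measurable_funeM|exact: measurable_cst].
have [ig|ni] := pselect (rho.-integrable [set: R] g); last first.
  rewrite (notint_N h t mh) ?(notint_N g t mg)// => ih; apply: ni.
  apply: (eq_integrable measurableT (fun x => (r^-1)%:E * (h x + (- c)%:E))%E g).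
    move=> x _; rewrite /h; case: (g x) => [v| |] /=.
    - by congr EFin; field; rewrite gt_eqF.
    - by rewrite (mulry r) gtr0_sg// mul1e /= (mulry r^-1) gtr0_sg ?invr_gt0// mul1e.
    - by rewrite (mulrNy r) gtr0_sg// mul1e /= (mulrNy r^-1) gtr0_sg ?invr_gt0// mul1e.
  apply: integrableZl => //.
  have i2 := finite_measure_integrable_cst rho (- c) (measurableT : measurable [set: R]).
  have i3 := integrableD measurableT ih i2.
  exact: i3.
set m := meanL rho g.
have mE : meanL rho h = r * m + c.
  rewrite /meanL /h integralD//; last 2 first.
  - exact: integrableZl.
  - exact: (finite_measure_integrable_cst rho c measurableT).
  rewrite integralZl// integral_cst// [X in (c%:E * X)%E](_ : _ = 1%E) ?mule1; last exact: probability_setT.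
  rewrite /m /meanL.
  by case: (\int[rho]_x g x)%E (integrable_fin_num measurableT ig) => //= v _.
have pt : forall x, ((h x - (r * m + c)%:E) = r%:E * (g x - m%:E))%E.
  move=> x; rewrite /h; case: (g x) => [v| |] /=.
  - by congr EFin; ring.
  - by rewrite (mulry r) gtr0_sg// mul1e.
  - by rewrite (mulrNy r) gtr0_sg// mul1e.
have sE : stdL rho h = r * stdL rho g.
  rewrite /stdL mE.
  have mgg : measurable_fun [set: R] (fun x => (g x - m%:E) * (g x - m%:E))%E.
    by apply: emeasurable_funM; apply: emeasurable_funB => //; exact: measurable_cst.
  have gg0 : forall x, [set: R] x -> (0 <= (g x - m%:E) * (g x - m%:E))%E.
    by move=> x _; rewrite -expe2 sqre_ge0.
  rewrite (_ : (fun x => _) = (fun x => (r ^+ 2)%:E * ((g x - m%:E) * (g x - m%:E)))%E); last first.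
    apply/funext => x; rewrite pt.
    by rewrite muleACA -EFinM expr2.
  rewrite (ge0_integralZl_EFin _ _ gg0 mgg) ?sqr_ge0//.
  rewrite -/m.
  case: (\int[rho]_x _)%E => [v| |] /=.
  - by rewrite sqrtrM ?sqr_ge0// sqrtr_sqr gtr0_norm.
  - by rewrite (mulry (r ^+ 2)) gtr0_sg ?exprn_gt0// mul1e /= sqrtr0 mulr0.
  - by rewrite (mulrNy (r ^+ 2)) gtr0_sg ?exprn_gt0// mul1e /= sqrtr0 mulr0.
rewrite /Nf mE sE pt -/m invfM.
rewrite (muleC r%:E) -muleA -(EFinM r (r^-1 * (stdL rho g)^-1)).
by rewrite mulrA mulfV ?gt_eqF// mul1r.
Qed.

End P2.
Arguments Nf {R}.

Section P3.
Variable R : realType.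

Lemma det2 (A : 'M[R]_2) : \det A = A 0 0 * A 1 1 - A 0 1 * A 1 0.
Proof.
rewrite (expand_det_row _ ord0) !big_ord_recl big_ord0 /cofactor !det_mx11 !mxE /=.
have e1 : lift ord0 (ord0 : 'I_1) = 1 :> 'I_2 by apply/val_inj.
have e2 : lift (1 : 'I_2) (ord0 : 'I_1) = 0 :> 'I_2 by apply/val_inj.
have e0 : (ord0 : 'I_2) = 0 by apply/val_inj.
rewrite e1 e2 e0 /= expr0 expr1 addr0. ring.
Qed.

Definition wv (A : 'M[R]_2) (th : R * R) : R * R :=
  (A 0 0 * th.1 + A 1 0 * th.2, A 0 1 * th.1 + A 1 1 * th.2).
Definition nrm (w : R * R) : R := Num.sqrt (w.1 ^+ 2 + w.2 ^+ 2).
Definition nz (w : R * R) : R * R := (w.1 / nrm w, w.2 / nrm w).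

Lemma nrm_sqr w : nrm w ^+ 2 = w.1 ^+ 2 + w.2 ^+ 2.
Proof. by rewrite /nrm sqr_sqrtr// addr_ge0// sqr_ge0. Qed.

Lemma nrm_gt0 w : 0 < w.1 ^+ 2 + w.2 ^+ 2 -> 0 < nrm w.
Proof. by move=> h; rewrite /nrm sqrtr_gt0. Qed.

Lemma nz_circle w : 0 < w.1 ^+ 2 + w.2 ^+ 2 -> circle1 (nz w).
Proof.
move=> h; rewrite /circle1 /nz /= !expr_div_n -mulrDl -nrm_sqr mulfV//.
by rewrite expf_neq0// gt_eqF// nrm_gt0.
Qed.

Lemma wv_pos A th : \det A != 0 -> circle1 th ->
  0 < (wv A th).1 ^+ 2 + (wv A th).2 ^+ 2.
Proof.
rewrite det2 /circle1 => dA c1.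
rewrite lt_neqAle addr_ge0 ?sqr_ge0 // andbT eq_sym.
apply/negP; rewrite paddr_eq0 ?sqr_ge0// !sqrf_eq0 /wv /= => /andP[/eqP h1 /eqP h2].
have t1 : th.1 * (A 0 0 * A 1 1 - A 0 1 * A 1 0) =
  A 1 1 * (A 0 0 * th.1 + A 1 0 * th.2) - A 1 0 * (A 0 1 * th.1 + A 1 1 * th.2) by ring.
have t2 : th.2 * (A 0 0 * A 1 1 - A 0 1 * A 1 0) =
  A 0 0 * (A 0 1 * th.1 + A 1 1 * th.2) - A 0 1 * (A 0 0 * th.1 + A 1 0 * th.2) by ring.
rewrite h1 h2 !mulr0 subr0 in t1 t2.
move/eqP: t1; rewrite mulf_eq0 (negbTE dA) orbF => /eqP t1.
move/eqP: t2; rewrite mulf_eq0 (negbTE dA) orbF => /eqP t2.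
by move: c1 => /=; rewrite t1 t2 expr0n /= addr0 => /eqP; rewrite eq_sym oner_eq0.
Qed.

Lemma ident A y th x : nrm (wv A th) != 0 ->
  dot2 (affmap A y x) th = nrm (wv A th) * dot2 x (nz (wv A th)) + dot2 y th.
Proof. by move=> h; rewrite /dot2 /affmap /nz /wv /=; field. Qed.

Lemma surj A ph : \det A != 0 -> circle1 ph ->
  exists th, circle1 th /\ nz (wv A th) = ph.
Proof.
move=> dA; case: ph => p1 p2; rewrite /circle1 /= => c1.
move: (dA); rewrite det2 => dA'.
pose d := A 0 0 * A 1 1 - A 0 1 * A 1 0.
pose v := ((A 1 1 * p1 - A 1 0 * p2) / d, (A 0 0 * p2 - A 0 1 * p1) / d).
have hv : wv A v = (p1, p2).
  by rewrite /wv /v /=; congr (_, _); rewrite /d; field.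
have vp : 0 < v.1 ^+ 2 + v.2 ^+ 2.
  rewrite lt_neqAle addr_ge0 ?sqr_ge0 // andbT eq_sym.
  apply/negP; rewrite paddr_eq0 ?sqr_ge0// !sqrf_eq0 => /andP[/eqP h1 /eqP h2].
  move: hv; rewrite /wv h1 h2 !mulr0 !addr0 => -[e1 e2].
  by move/eqP: c1; rewrite -e1 -e2 expr0n /= addr0 eq_sym oner_eq0.
clearbody v d.
have np := nrm_gt0 _ vp.
exists (nz v); split; first exact: nz_circle.
have -> : wv A (nz v) = (p1 / nrm v, p2 / nrm v).
  case: hv => <- <-; rewrite /wv /nz /=; congr (_, _); field; by rewrite gt_eqF.
have nn : nrm (p1 / nrm v, p2 / nrm v) = (nrm v)^-1.
  rewrite /nrm /= !expr_div_n -mulrDl c1 mul1r -exprVn sqrtr_sqr gtr0_norm//.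
  by rewrite invr_gt0.
by rewrite /nz nn /=; congr (_, _); rewrite invrK -mulrA mulVf ?mulr1// gt_eqF.
Qed.

End P3.
Arguments wv {R}. Arguments nrm {R}. Arguments nz {R}.
Arguments nrm_gt0 {R}. Arguments wv_pos {R A th}. Arguments surj {R A ph}. Arguments nz_circle {R w}.

Section P4.
Variable R : realType.

Lemma cdf_mono (rho : probability R R) a b : a <= b -> Defs.cdf rho a <= Defs.cdf rho b.
Proof.
move=> ab.
have mI : forall c : R, measurable [set s : R | s <= c].
  move=> c; rewrite (_ : [set s : R | s <= c] = `]-oo, c]%classic).
    exact: measurable_itv.
  by apply/seteqP; split => x /=; rewrite in_itv.
rewrite /Defs.cdf fine_le ?fin_num_measure//.
apply: le_measure; rewrite ?inE//.
by move=> x /= xa; exact: le_trans xa ab.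
Qed.

Lemma cdt_meas (rho : probability R R) nu : measurable_fun [set: R] (cdt rho nu).
Proof.
apply: nd_emeasurable => a b ab; rewrite /cdt /gen_inv.
apply: ereal_inf_le_tmp => _ [s hs <-]; exists s => //=.
exact: le_lt_trans (cdf_mono rho a b ab) hs.
Qed.

Lemma NthetaE (rho : probability R R) th (nu : set (R * R) -> \bar R) t :
  Ntheta rho th nu t = Nf rho (cdt rho (radon th nu)) t.
Proof. by []. Qed.

End P4.

Lemma radon_push (R : realType) (mu : set (R * R) -> \bar R) (A : 'M[R]_2) (y : R * R) th :
  nrm (wv A th) != 0 ->
  radon th (pushf (affmap A y) mu) =
    pushf (fun s => nrm (wv A th) * s + dot2 y th) (radon (nz (wv A th)) mu).
Proof.
move=> n0; apply/funext => B; rewrite /radon /pushf.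
congr (mu _); apply/funext => x.
change (B (dot2 (affmap A y x) th) = B (nrm (wv A th) * dot2 x (nz (wv A th)) + dot2 y th)).
by rewrite ident.
Qed.

Lemma Nf_push (R : realType) (rho : probability R R) (nu : set R -> \bar R) r c t :
  0 < r -> Nf rho (cdt rho (pushf (fun s => r * s + c) nu)) t = Nf rho (cdt rho nu) t.
Proof.
move=> r0.
have -> : cdt rho (pushf (fun s => r * s + c) nu) =
   (fun s => r%:E * cdt rho nu s + c%:E)%E.
  by apply/funext => s; exact: cdt_aff.
by apply: Nf_aff => //; exact: cdt_meas.
Qed.

Lemma key_lemma (R : realType) (rho : probability R R)
  (mu : probability (R * R)%type R) (A : 'M[R]_2) (y : R * R) t th :
  \det A != 0 -> circle1 th ->
  Ntheta rho th (pushf (affmap A y) mu) t = Ntheta rho (nz (wv A th)) mu t.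
Proof.
move=> dA c1.
have np := nrm_gt0 _ (wv_pos dA c1).
rewrite !NthetaE radon_push; last by rewrite gt_eqF.
rewrite Nf_push; [reflexivity|exact: np].
Qed.

Theorem proposition8 (R : realType) (rho : probability R R)
  (rho_atomless : forall x : R, rho [set x] = 0%E)
  (mu : probability (R * R)%type R) (hmu : in_Pcstar mu)
  (A : 'M[R]_2) (hA : A \in unitmx) (y : R * R) :
  Nmax rho (pushf (affmap A y) mu) = Nmax rho mu.
Proof.
have dA : \det A != 0 by move: hA; rewrite unitmxE unitfE.
rewrite /Nmax; apply: boolp.funext => t.
apply: (congr1 (@ereal_sup _)).
apply/seteqP; split => _ [th c1 <-].
- exists (nz (wv A th)); first exact: nz_circle (wv_pos dA c1).
  rewrite (key_lemma _ rho mu _ y t _ dA c1); reflexivity.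
- have [th' [c1' e]] := surj dA c1.
  exists th'; first exact: c1'.
  rewrite (key_lemma _ rho mu _ y t _ dA c1') e; reflexivity.
Qed.
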